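(* (i) Every topological group without nontrivial convergent sequences is TAP. (ii) Every infinite pseudocompact topological group without nontrivial convergent sequences is TAP but not NSS.
   Context: Topological groups are Hausdorff. A topological group is NSS if some open neighborhood of the identity contains no nontrivial subgroup. A subset $A$ of a topological group $G$ is absolutely productive in $G$ if for every injection $a:\mathbb{N}\to A$ and every map $z:\mathbb{N}\to\mathbb{Z}$ the sequence $\left(\prod_{n=0}^{k}a(n)^{z(n)}\right)_{k\in\mathbb{N}}$ converges in $G$; $G$ is TAP if every absolutely productive subset of $G$ is finite. A nontrivial convergent sequence is a convergent sequence that is not eventually constant. *)

(* Defs.v *)
From HB Require Import structures.
From mathcomp Require Import all_boot all_order all_algebra.
From mathcomp Require Import all_classical all_reals all_analysis.
From mathcomp Require Import Rstruct Rstruct_topology.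
Set Implicit Arguments. Unset Strict Implicit. Unset Printing Implicit Defensive.
Import Order.TTheory GRing.Theory Num.Theory.
Local Open Scope classical_set_scope.

Section TopGroupDefs.
Variables (T : topologicalType) (mul : T -> T -> T) (inv : T -> T) (e : T).

Definition is_topgroup : Prop :=
  [/\ (forall x y z, mul x (mul y z) = mul (mul x y) z),
      (forall x, mul e x = x /\ mul x e = x),
      (forall x, mul (inv x) x = e /\ mul x (inv x) = e),
      (continuous (fun p : T * T => mul p.1 p.2) /\ continuous inv) &
      hausdorff_space T].

Definition zpow (x : T) (z : int) : T :=
  match z with
  | Posz n => iter n (mul x) e
  | Negz n => inv (iter n.+1 (mul x) e)
  end.

Fixpoint partial_prod (a : nat -> T) (z : nat -> int) (k : nat) : T :=
  match k with
  | 0 => zpow (a 0%N) (z 0%N)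
  | k'.+1 => mul (partial_prod a z k') (zpow (a k) (z k))
  end.

Definition is_subgroup (H : set T) : Prop :=
  [/\ H e, (forall x y, H x -> H y -> H (mul x y)) & (forall x, H x -> H (inv x))].

Definition NSS : Prop :=
  exists U : set T, [/\ open U, U e &
    forall H : set T, is_subgroup H -> H `<=` U -> H = [set e]].

Definition absolutely_productive (A : set T) : Prop :=
  forall (a : nat -> T) (z : nat -> int),
    injective a -> (forall n, A (a n)) ->
    exists l : T, partial_prod a z @ \oo --> l.

Definition TAP : Prop :=
  forall A : set T, absolutely_productive A -> finite_set A.

End TopGroupDefs.

Definition nontrivial_convergent_seq (T : topologicalType) (x : nat -> T) : Prop :=
  (exists l : T, x @ \oo --> l) /\ ~ (exists N, forall n, (N <= n)%N -> x n = x N).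

Definition no_nontrivial_convergent_seq (T : topologicalType) : Prop :=
  forall x : nat -> T, ~ nontrivial_convergent_seq x.

Definition pseudocompact (T : topologicalType) : Prop :=
  forall f : T -> Rdefinitions.R, continuous f -> exists M : Rdefinitions.R, forall x, (`|f x| <= M)%R.

(* Main.v *)
Require Import Defs.
From HB Require Import structures.
From mathcomp Require Import all_boot all_order all_algebra.
From mathcomp Require Import all_classical all_reals all_analysis.
From mathcomp Require Import Rstruct Rstruct_topology.
From mathcomp Require Import lra.
Set Implicit Arguments. Unset Strict Implicit. Unset Printing Implicit Defensive.
Import Order.TTheory GRing.Theory Num.Theory.
Local Open Scope classical_set_scope.

Lemma infinite_seq (T : Type) (A : set T) : infinite_set A ->
  exists a : nat -> T, injective a /\ forall n, A (a n).
Proof.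
move=> /infiniteP /card_leP /injfunPex [f _ finj].
pose g (n : nat) : [set: nat] := exist _ n (mem_set (I : setT n)).
exists (fun n => val (f (g n))); split; last by move=> n; exact: (set_mem (valP (f (g n)))).
move=> m n /val_inj /finj => /(_ (mem_set I) (mem_set I)) H.
by have := congr1 val H.
Qed.

Lemma inj_not_evcst (T : Type) (a : nat -> T) : injective a ->
  ~ (exists N, forall n, (N <= n)%N -> a n = a N).
Proof.
move=> ai [N HN]; have := HN N.+1 (leqnSn N) => /ai /eqP; by rewrite gtn_eqF.
Qed.

Section P1.
Variables (T : topologicalType) (mul : T -> T -> T) (inv : T -> T) (e : T).
Hypothesis G : is_topgroup mul inv e.

Lemma part1 : no_nontrivial_convergent_seq T -> TAP mul inv e.
Proof.
case: G => mA me mi [cm ci] hs.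
move=> noc A Ap; apply/not_notP => Ainf.
have [a [ai aA]] := infinite_seq Ainf.
have [l pl] := Ap a (fun=> Posz 1) ai aA.
set p := partial_prod mul inv e a (fun=> Posz 1) in pl.
have Ea n : a n.+1 = mul (inv (p n)) (p n.+1).
  rewrite /p /= /zpow /=; rewrite -/(partial_prod _ _ _ a _ n).
  by rewrite mA (mi _).1 (me _).1 (me _).2.
apply: (noc (fun n => a n.+1)); split; last first.
  by apply: inj_not_evcst => m n /ai; case.
exists (mul (inv l) l).
have pS : (fun n => p n.+1) @ \oo --> l.
  have := cvg_comp _ _ (cvg_addnr 1) pl.
  by rewrite (@eq_cvg _ _ _ _ (fun n => p n.+1)) // => n /=; rewrite addn1.
have := @continuous2_cvg _ _ _ _ _ _ _ _ mul _ _ (cm (inv l, l)) (continuous_cvg _ (ci l) pl) pS.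
move=> H; have {}H := H eventually_filter eventually_filter; apply: (cvg_trans _ H).
apply: near_eq_cvg; apply: nearW => n /=; by rewrite Ea.
Qed.
End P1.

Section Grp.
Local Unset Implicit Arguments.
Variables (T : topologicalType) (mul : T -> T -> T) (inv : T -> T) (e : T).
Hypothesis G : is_topgroup mul inv e.

Let mA : forall x y z, mul x (mul y z) = mul (mul x y) z. Proof. by case: G. Qed.
Let m1x x : mul e x = x. Proof. by case: G => _ /(_ x) []. Qed.
Let mx1 x : mul x e = x. Proof. by case: G => _ /(_ x) []. Qed.
Let mVx x : mul (inv x) x = e. Proof. by case: G => _ _ /(_ x) []. Qed.
Let mxV x : mul x (inv x) = e. Proof. by case: G => _ _ /(_ x) []. Qed.
Let cm : continuous (fun p : T * T => mul p.1 p.2). Proof. by case: G => _ _ _ []. Qed.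
Let ci : continuous inv. Proof. by case: G => _ _ _ []. Qed.

Lemma g_mA x y z : mul x (mul y z) = mul (mul x y) z. Proof. exact: mA. Qed.
Lemma g_m1x x : mul e x = x. Proof. exact: m1x. Qed.
Lemma g_mx1 x : mul x e = x. Proof. exact: mx1. Qed.
Lemma g_mVx x : mul (inv x) x = e. Proof. exact: mVx. Qed.
Lemma g_mxV x : mul x (inv x) = e. Proof. exact: mxV. Qed.
Lemma g_cm : continuous (fun p : T * T => mul p.1 p.2). Proof. exact: cm. Qed.

Lemma g_inv_uniq a b : mul a b = e -> b = inv a.
Proof. by move=> ab; rewrite -[b]m1x -(mVx a) -mA ab mx1. Qed.

Lemma g_invK x : inv (inv x) = x.
Proof. by apply/esym/g_inv_uniq. Qed.

Lemma g_inve : inv e = e.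
Proof. by apply/esym/g_inv_uniq; rewrite m1x. Qed.

Lemma g_invM x y : inv (mul x y) = mul (inv y) (inv x).
Proof. by apply/esym/g_inv_uniq; rewrite mA -(mA x) mxV mx1 mxV. Qed.

Lemma g_lmul_cont a : continuous (mul a).
Proof.
move=> y; have := @continuous2_cvg _ _ _ _ _ _ (fun=> a) id mul a y (cm (a, y)).
by move=> /(_ _ _ (cvg_cst a) cvg_id).
Qed.

Lemma g_inv_cont : continuous inv. Proof. exact: ci. Qed.

Lemma g_nbhs_transl (V : set T) x : nbhs e V -> nbhs x [set y | V (mul (inv x) y)].
Proof. move=> Ve; have := g_lmul_cont (inv x) x; rewrite /continuous_at mVx; exact. Qed.

Lemma g_split (V : set T) : nbhs e V -> exists W : set T,
  [/\ nbhs e W, (forall x, W x -> W (inv x)) & (forall x y, W x -> W y -> V (mul x y))].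
Proof.
move=> Ve; have := cm (e, e); rewrite /continuous_at /= m1x => /(_ _ Ve).
move=> [[A B] /= [nA nB] AB].
pose W0 := A `&` B.
have nW0 : nbhs e W0 by apply: filterI.
have nW1 : nbhs e (inv @^-1` W0) by apply: ci; rewrite g_inve.
exists (W0 `&` inv @^-1` W0); split.
- exact: filterI.
- by move=> x [w1 w2]; split => //=; rewrite g_invK.
- by move=> x y [[Ax _] _] [[_ By] _]; apply: (AB (x, y)).
Qed.

End Grp.
Arguments g_inv_uniq {T mul inv e} G a b.
Arguments g_invK {T mul inv e} G x.
Arguments g_inve {T mul inv e} G.
Arguments g_invM {T mul inv e} G x y.
Arguments g_lmul_cont {T mul inv e} G a.
Arguments g_inv_cont {T mul inv e} G.
Arguments g_nbhs_transl {T mul inv e} G V x.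
Arguments g_split {T mul inv e} G V.
Arguments g_mA {T mul inv e} G x y z.
Arguments g_m1x {T mul inv e} G x.
Arguments g_mx1 {T mul inv e} G x.
Arguments g_mVx {T mul inv e} G x.
Arguments g_mxV {T mul inv e} G x.
Arguments g_cm {T mul inv e} G.

Record gprops (T : topologicalType) (mul : T -> T -> T) (inv : T -> T) (e : T)
  (P : set (set T)) : Prop := GProps {
  gp_grp : is_topgroup mul inv e;
  gp_ex : exists V, P V;
  gp_nbhs : forall V, P V -> nbhs e V;
  gp_sym : forall V, P V -> forall x, V x -> V (inv x);
  gp_split : forall V, P V -> exists W, P W /\ forall x y, W x -> W y -> V (mul x y);
  gp_cap : forall V1 V2, P V1 -> P V2 -> exists W, P W /\ W `<=` V1 `&` V2
}.

Section GU.
Local Unset Implicit Arguments.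
Variables (T : topologicalType) (mul : T -> T -> T) (inv : T -> T) (e : T)
  (P : set (set T)) (H : gprops mul inv e P).

Definition gD (V : set T) : set (T * T) := [set xy | V (mul (inv xy.1) xy.2)].
Definition gent : set_system (T * T) := filter_from P gD.

Let G := gp_grp H.
Let mA : forall x y z, mul x (mul y z) = mul (mul x y) z. Proof. by case: G. Qed.
Let m1x x : mul e x = x. Proof. by case: G => _ /(_ x) []. Qed.
Let mx1 x : mul x e = x. Proof. by case: G => _ /(_ x) []. Qed.
Let mVx x : mul (inv x) x = e. Proof. by case: G => _ _ /(_ x) []. Qed.
Let mxV x : mul x (inv x) = e. Proof. by case: G => _ _ /(_ x) []. Qed.

Lemma gent_filter : Filter gent.
Proof.
apply: filter_from_filter; first by have [V PV] := gp_ex H; exists V.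
move=> V1 V2 P1 P2; have [W [PW WV]] := gp_cap H P1 P2.
by exists W => // xy /WV [].
Qed.

Lemma gent_diag A : gent A -> diagonal `<=` A.
Proof.
move=> [V PV DA] [x y]; rewrite /diagonal /= => <-; apply: DA; rewrite /gD /= mVx.
exact: nbhs_singleton (gp_nbhs H PV).
Qed.

Lemma gent_inv A : gent A -> gent A^-1%relation.
Proof.
move=> [V PV DA]; exists V => // [[x y]] /= Vxy; apply: (DA (y, x)).
by move: (gp_sym H PV Vxy); rewrite /gD /= (g_invM G) (g_invK G).
Qed.

Lemma gent_split A : gent A -> exists2 B, gent B & (B \; B `<=` A)%relation.
Proof.
move=> [V PV DA]; have [W [PW WW]] := gp_split H PV.
exists (gD W); first by exists W.
move=> [x z] [y /= Wxy Wyz]; apply: DA; rewrite /gD /=.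
have -> : mul (inv x) z = mul (mul (inv x) y) (mul (inv y) z).
  by rewrite -mA (mA y) mxV m1x.
exact: WW.
Qed.

Definition gunif : Type := let _ := H in T.

HB.instance Definition _ := Choice.on gunif.
HB.instance Definition _ := @isUniform.Build gunif gent gent_filter gent_diag gent_inv gent_split.

Lemma gunif_entE : @entourage gunif = gent. Proof. by []. Qed.

Lemma gunif_nbhs x (A : set T) : @nbhs gunif gunif x A -> @nbhs T T x A.
Proof.
rewrite -nbhs_entourageE => -[E [V PV DE] EA].
apply: (filterS EA); apply: (filterS (P := [set y | V (mul (inv x) y)])).
  by move=> y Vy; apply/mem_set; apply: DE.
exact: (g_nbhs_transl G _ _ (gp_nbhs H PV)).
Qed.

End GU.
Arguments gD {T} mul inv V.
Arguments gent {T} mul inv P.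
Arguments gunif {T mul inv e P} H.
Arguments gunif_nbhs {T mul inv e P} H x A.

Section Full.
Local Unset Implicit Arguments.
Variables (T : topologicalType) (mul : T -> T -> T) (inv : T -> T) (e : T).
Hypothesis G : is_topgroup mul inv e.

Definition Pfull : set (set T) := [set V | nbhs e V /\ forall x, V x -> V (inv x)].

Lemma Pfull_props : gprops mul inv e Pfull.
Proof.
split => //.
- exists setT; split => //; exact: filterT.
- by move=> V [].
- by move=> V [].
- move=> V [nV _]; have [W [nW sW WW]] := g_split G V nV.
  by exists W; split.
- move=> V1 V2 [n1 s1] [n2 s2]; exists (V1 `&` V2); split => //.
  split; first exact: filterI.
  by move=> x [/s1 ? /s2 ?].
Qed.

Lemma g_urysohn (W : set T) : nbhs e W -> exists h : T -> Rdefinitions.R,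
  [/\ continuous h, (forall y, 0 <= h y <= 1)%R, h e = 0%R & forall y, ~ W y -> h y = 1%R].
Proof.
move=> nW.
have [V [nV sV VV]] := g_split G W nW.
have VW : V `<=` W.
  by move=> x Vx; have := VV x e Vx (nbhs_singleton nV); rewrite (g_mx1 G).
have sep : uniform_separator [set e] (~` W).
  exists (Uniform.class (gunif Pfull_props)), (gD mul inv V); split.
  - by exists V => //; split.
  - rewrite -subset0 => -[a b] [[/= -> nWb]]; rewrite /gD /= (g_inve G).
    by rewrite (g_m1x G) => /VW.
  - by move=> x A; apply: (gunif_nbhs Pfull_props).
have /(@uniform_separatorP _ Rdefinitions.R) [h [ch hr h0 h1]] := sep.
exists h; split => //.
- by move=> y; have := hr (h y) (ex_intro2 _ _ y I erefl); rewrite /= in_itv /=.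
- by apply: h0; exists e.
- by move=> y nWy; apply: h1; exists y.
Qed.
End Full.

Section Cnt.
Local Unset Implicit Arguments.
Variables (T : topologicalType) (mul : T -> T -> T) (inv : T -> T) (e : T).
Hypothesis G : is_topgroup mul inv e.
Variable U : set T.
Hypotheses (Uo : open U) (Ue : U e)
  (Uns : forall H, is_subgroup mul inv e H -> H `<=` U -> H = [set e]).

Lemma step_ex : exists step : set T -> set T, forall V, nbhs e V ->
  [/\ nbhs e (step V), (forall x, step V x -> step V (inv x)) &
      (forall x y, step V x -> step V y -> V (mul x y))].
Proof.
have H : forall V : set T, exists W : set T, nbhs e V ->
  [/\ nbhs e W, (forall x, W x -> W (inv x)) &
      (forall x y, W x -> W y -> V (mul x y))].
  move=> V; have [nV|nnV] := pselect (nbhs e V).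
    by have [W [? ? ?]] := g_split G V nV; exists W.
  by exists V.
by have [f Hf] := boolp.choice H; exists f.
Qed.

Definition step := proj1_sig (cid step_ex).
Let stepP : forall V, nbhs e V -> _ := proj2_sig (cid step_ex).

Definition Vs n := iter n.+1 step U.

Lemma iter_nbhs n : nbhs e (iter n step U).
Proof.
elim: n => [|n IH] /=; first exact: open_nbhs_nbhs.
by have [] := stepP _ IH.
Qed.

Lemma Vs_nbhs n : nbhs e (Vs n).
Proof. exact: iter_nbhs. Qed.

Lemma Vs_sym n x : Vs n x -> Vs n (inv x).
Proof. by have [_ h _] := stepP _ (iter_nbhs n); exact: h. Qed.

Lemma Vs_mul n x y : Vs n.+1 x -> Vs n.+1 y -> Vs n (mul x y).
Proof. by have [_ _ h] := stepP _ (iter_nbhs n.+1); exact: h. Qed.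

Lemma Vs_dec n : Vs n.+1 `<=` Vs n.
Proof.
move=> x Vx; rewrite -(g_mx1 G x); apply: Vs_mul => //.
exact: nbhs_singleton (Vs_nbhs _).
Qed.

Lemma Vs_le m n : (m <= n)%N -> Vs n `<=` Vs m.
Proof.
move=> /subnK <-; elim: (n - m)%N => [|k IH] //= x Vx.
by apply: IH; apply: Vs_dec.
Qed.

Lemma Vs0U : Vs 0 `<=` U.
Proof.
move=> x Vx; have [_ _ h] := stepP _ (iter_nbhs 0).
rewrite -(g_mx1 G x); apply: h => //; exact: nbhs_singleton (Vs_nbhs 0).
Qed.

Lemma Vs_cap y : (forall n, Vs n y) -> y = e.
Proof.
move=> Hy.
have K : is_subgroup mul inv e [set z | forall n, Vs n z].
  split.
  - by move=> n; exact: nbhs_singleton (Vs_nbhs n).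
  - by move=> a b Ha Hb n; apply: Vs_mul.
  - by move=> a Ha n; apply: Vs_sym.
have := Uns _ K (fun z Hz => Vs0U z (Hz 0%N)).
by move=> /(congr1 (fun S : set T => S y)) /=; rewrite propeqE => -[/(_ Hy)].
Qed.

Definition Pcnt : set (set T) := range Vs.

Lemma Pcnt_props : gprops mul inv e Pcnt.
Proof.
split => //.
- by exists (Vs 0); exists 0%N.
- by move=> V [n _ <-]; exact: Vs_nbhs.
- by move=> V [n _ <-]; exact: Vs_sym.
- by move=> V [n _ <-]; exists (Vs n.+1); split; [exists n.+1|exact: Vs_mul].
- move=> V1 V2 [n _ <-] [m _ <-]; exists (Vs (maxn n m)); split; first by exists (maxn n m).
  by move=> x Vx; split; apply: Vs_le Vx; rewrite ?leq_maxl ?leq_maxr.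
Qed.

Lemma Pcnt_cu : countable_uniformity (gunif Pcnt_props).
Proof.
apply/countable_uniformityP; exists (fun n => gD mul inv (Vs n)).
- by move=> A [V [n _ <-] DA]; exists n.
- by move=> n; exists (Vs n) => //; exists n.
Qed.


Definition PT := countable_uniform.type Pcnt_cu.
Definition delta (y : T) : Rdefinitions.R := fine (@edist Rdefinitions.R PT (e, y)).

Lemma edist_finite (y : T) : (@edist Rdefinitions.R PT (e, y)) \is a fin_num.
Proof.
apply/edist_finP; exists 2%R => //.
exact: (@countable_uniform.countable_uniform_bounded Rdefinitions.R _ Pcnt_cu e y).
Qed.

Lemma delta_E y : @edist Rdefinitions.R PT (e, y) = (delta y)%:E.
Proof. by rewrite /delta fineK // edist_finite. Qed.

Lemma delta_ge0 y : (0 <= delta y)%R.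
Proof. by rewrite -lee_fin -delta_E edist_ge0. Qed.

Lemma delta_e : delta e = 0%R.
Proof. by rewrite /delta edist_refl. Qed.

Lemma delta0 y : delta y = 0%R -> y = e.
Proof.
move=> d0; apply: Vs_cap => n.
have : @entourage PT (gD mul inv (Vs n)) by exists (Vs n) => //; exists n.
rewrite -(@entourage_ballE _ (PT : pseudoMetricType Rdefinitions.R)) => -[r /= rpos sub].
have : ball (e : PT) r (y : PT).
  by apply: (@edist_lt_ball Rdefinitions.R PT r (e, y)); rewrite delta_E d0 lte_fin.
move=> /(sub (e, y)); rewrite /gD /= (g_inve G) (g_m1x G) //.
Qed.

Lemma delta_cont : continuous delta.
Proof.
move=> y.
have h1 := cvg_comp (fun z : PT => (e, z)) (@edist Rdefinitions.R PT)
  (cvg_pair (cvg_cst (e : PT)) (@cvg_id _ (nbhs (y : PT)))) (@edist_continuous Rdefinitions.R PT (e, y)).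
have {}h1 := h1 (nbhs_filter _) (nbhs_filter _) (nbhs_filter _) (nbhs_filter _).
rewrite /= delta_E in h1.
have h2 := fine_cvg h1.
have {}h2 := h2 (nbhs_filter _).
apply: (cvg_trans _ h2) => A /=.
exact: (gunif_nbhs Pcnt_props).
Qed.

End Cnt.

Import numFieldNormedType.Exports.

Lemma inv_cont_gen (R : realType) (T : topologicalType) (d h : T -> R) :
  continuous d -> continuous h -> (forall y, (d y + 1 - h y)%R != 0%R) ->
  continuous (fun y => ((d y + 1 - h y)^-1)%R).
Proof.
move=> cd ch Dn0 y.
have hD1 : (d + (fun=> 1))%R @ y --> (d y + 1)%R.
  by apply: cvgD; [exact: cd | exact: cvg_cst].
have hD : ((d + (fun=> 1)) - h)%R @ y --> (d y + 1 - h y)%R.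
  by apply: cvgB; [exact: hD1 | exact: ch].
exact: (cvgV (Dn0 y) hD).
Qed.

Lemma near_lt_gen (R : realType) (T : topologicalType) (d : T -> R) x r :
  continuous d -> (d x < r)%R -> \forall y \near x, (d y < r)%R.
Proof. by move=> cd dx; exact: (cvgr_lt _ (cd x) _ dx). Qed.

Section Main.
Local Unset Implicit Arguments.
Variables (T : topologicalType) (mul : T -> T -> T) (inv : T -> T) (e : T).
Hypothesis G : is_topgroup mul inv e.
Variable U : set T.
Hypotheses (Uo : open U) (Ue : U e)
  (Uns : forall H, is_subgroup mul inv e H -> H `<=` U -> H = [set e]).
Hypotheses (pc : pseudocompact T) (inf : infinite_set [set: T]).

Let d := delta T mul inv e G U Uo Ue.
Let R := Rdefinitions.R.
Let d_ge0 y : (0 <= d y)%R := delta_ge0 T mul inv e G U Uo Ue y.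
Let d_e : d e = 0%R := delta_e T mul inv e G U Uo Ue.
Let d0 y : d y = 0%R -> y = e := delta0 T mul inv e G U Uo Ue Uns y.
Let d_cont : continuous d := delta_cont T mul inv e G U Uo Ue.

Lemma d_base (W : set T) : nbhs e W -> exists r : R, (0 < r)%R /\ forall y, (d y < r)%R -> W y.
Proof.
move=> nW; apply: contrapT => nC.
have key : forall r : R, (0 < r)%R -> exists y, (d y < r)%R /\ ~ W y.
  move=> r r0; apply: contrapT => hn; apply: nC; exists r; split => // y dy.
  by apply: contrapT => nWy; apply: hn; exists y.
have [h [ch hr h0 h1]] := g_urysohn T mul inv e G W nW.
have Dn0 y : (d y + 1 - h y)%R != 0%R.
  apply/negP => /eqP D0.
  have [hy0 hy1] := andP (hr y).
  have dy0 : d y = 0%R by have := d_ge0 y; lra.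
  have hy : h y = 1%R by have := d_ge0 y; lra.
  by move: hy; rewrite (d0 _ dy0) h0; lra.
pose F y := ((d y + 1 - h y)^-1)%R.
have cF : continuous F.
  exact: (@inv_cont_gen Rdefinitions.R T d h d_cont ch Dn0).
have [M HM] := pc F cF.
have M0 : (0 <= M)%R by apply: le_trans (HM e); exact: normr_ge0.
have [y [dy nWy]] := key ((M + 1)^-1)%R (ltac:(rewrite invr_gt0; lra)).
have hy := h1 y nWy.
have dpos : (0 < d y)%R.
  rewrite lt_neqAle d_ge0 andbT; apply/eqP => /esym /d0 ye.
  by apply: nWy; rewrite ye; exact: nbhs_singleton.
have FE : F y = ((d y)^-1)%R by rewrite /F hy; congr (_^-1)%R; lra.
have := HM y; rewrite FE gtr0_norm ?invr_gt0 // => HFy.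
have i1 : (d y * (d y)^-1 = 1)%R by rewrite mulfV // gt_eqF.
have rM : ((M + 1) * (M + 1)^-1 = 1)%R by rewrite mulfV //; lra.
nra.
Qed.


Lemma d_noniso (r : R) : (0 < r)%R -> exists y, (d y < r)%R /\ y <> e.
Proof.
move=> r0; apply: contrapT => hn.
have hn' y : (d y < r)%R -> y = e.
  by move=> dy; apply: contrapT => ye; apply: hn; exists y.
have ne : nbhs e [set e].
  apply: filterS (@near_lt_gen Rdefinitions.R T d e r d_cont _).
    by move=> y /hn'.
  by rewrite d_e.
have disc (x : T) : nbhs x [set x].
  apply: filterS (g_nbhs_transl G [set e] x ne) => y /= Hy.
  by rewrite -(g_m1x G y) -(g_mxV G x) -(g_mA G) Hy (g_mx1 G).
have [a [ai _]] := infinite_seq inf.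
pose f (y : T) : R := (('pinv_(fun=> 0%N) [set: nat] a y)%:R)%R.
have cf : continuous f.
  move=> x B /= Bn; apply: filterS (disc x) => y /= ->.
  exact: nbhs_singleton Bn.
have [M HM] := pc f cf.
pose n := (Num.trunc M).+1.
have fa : f (a n) = (n%:R)%R.
  rewrite /f pinvKV //; [by move=> u v _ _; exact: ai | exact: mem_set].
have := HM (a n); rewrite fa normr_nat.
have := truncnS_gt M; rewrite -/n.
lra.
Qed.

Lemma main_false : no_nontrivial_convergent_seq T -> False.
Proof.
move=> noc.
have sq : forall n : nat, exists y, (d y < (n.+1%:R)^-1)%R /\ y <> e.
  by move=> n; apply: d_noniso; rewrite invr_gt0 ltr0n.
have [x Hx] := boolp.choice sq.
have xe : x @ \oo --> e.
  move=> W nW; have [r [r0 Hr]] := d_base W nW.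
  pose N := Num.trunc (r^-1)%R.
  have rN := truncnS_gt (r^-1)%R; rewrite -/N in rN.
  exists N => // n /= Nn; apply: Hr.
  have [dx _] := Hx n.
  have Nn' : ((N.+1)%:R <= (n.+1)%:R :> R)%R by rewrite ler_nat ltnS.
  have i1 : ((n.+1)%:R * ((n.+1)%:R)^-1 = 1 :> R)%R by rewrite mulfV.
  have i2 : ((N.+1)%:R * ((N.+1)%:R)^-1 = 1 :> R)%R by rewrite mulfV.
  have i3 : (r * r^-1 = 1)%R by rewrite mulfV // gt_eqF.
  have p1 : (0 < ((n.+1)%:R)^-1 :> R)%R by rewrite invr_gt0 ltr0n.
  have p2 : (0 < ((N.+1)%:R)^-1 :> R)%R by rewrite invr_gt0 ltr0n.
  have p3 : (0 < (N.+1)%:R :> R)%R by rewrite ltr0n.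
  have p4 : (0 < r^-1)%R by rewrite invr_gt0.
  have h1 : (((n.+1)%:R)^-1 <= ((N.+1)%:R)^-1 :> R)%R.
    by rewrite lef_pV2 ?posrE ?ltr0n.
  have h2 : (((N.+1)%:R)^-1 < r :> R)%R.
    by rewrite -[r]invrK ltf_pV2 ?posrE ?ltr0n.
  by apply: (lt_trans dx); exact: (le_lt_trans h1 h2).
apply: (noc x); split; first by exists e.
move=> [N HN].
have c1 : x @ \oo --> x N.
  by apply: cvg_near_cst; exists N => // n /= Nn; exact: HN.
have hs : hausdorff_space T by case: G.
have xNe := cvg_unique hs c1 xe.
have [_ H] := Hx N; apply: H; apply: xNe; exact: fmap_proper_filter.
Qed.

End Main.


Theorem proposition4p10 :
  (forall (T : topologicalType) (mul : T -> T -> T) (inv : T -> T) (e : T),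
     is_topgroup mul inv e ->
     no_nontrivial_convergent_seq T ->
     TAP mul inv e)
  /\
  (forall (T : topologicalType) (mul : T -> T -> T) (inv : T -> T) (e : T),
     is_topgroup mul inv e ->
     infinite_set [set: T] ->
     pseudocompact T ->
     no_nontrivial_convergent_seq T ->
     TAP mul inv e /\ ~ NSS mul inv e).
Proof.
split.
  by move=> T mul inv e G noc; exact: (part1 G noc).
move=> T mul inv e G inf pc noc; split; first exact: (part1 G noc).
move=> [U [Uo Ue Uns]].
exact: (main_false _ _ _ _ G U Uo Ue Uns pc inf noc).
Qed.
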